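(* Let $\mathbf p=(p_1,\dots,p_n)$ be positive integers with $p_1\ge\cdots\ge p_n$, and let $0\le c'<c\le 1$. Then for every house size $h>0$ we have $S_c(h,\mathbf p)\le S_{c'}(h,\mathbf p)$ in lexicographic order. Likewise $S_c(\mathbf p)\le S_{c'}(\mathbf p)$ in lexicographic order.
   Context: Stationary divisor method with cut point $c\in[0,1]$: seats are allocated one at a time. Initially each party $i$ has $a_i=0$ seats; each next seat goes to a party $i$ maximizing $p_i/(a_i+c)$, whose $a_i$ then increases by $1$. Ties are broken in favor of the smallest index. For $c=0$ the convention is that $p_i/0>p_j/0$ whenever $p_i>p_j$, and $p_i/0>p_j/k$ for every $k>0$. $S_c(h,\mathbf p)=(s_1,\dots,s_h)$, where $s_j$ is the index of the party receiving the $j$-th seat, and $S_c(\mathbf p)$ is the corresponding infinite sequence. Lexicographic order on sequences: $s<t$ if for some $k\ge0$ we have $s_i=t_i$ for $i\le k$ and $s_{k+1}<t_{k+1}$. *)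

(* Defs.v *)
(* parties are indexed 0..n-1 (0-based version of 1..n). *)
From mathcomp Require Import all_boot all_order all_algebra.
From mathcomp Require Import reals.
Set Implicit Arguments. Unset Strict Implicit. Unset Printing Implicit Defensive.
Import Order.TTheory GRing.Theory Num.Theory.
Local Open Scope ring_scope.

Section Stationary.
Variable R : realType.

(* [beats c pi ai pj aj]: party with votes pi and ai seats has strictly larger
   priority pi/(ai+c) than party with pj votes and aj seats, using the
   convention for division by 0: pi/0 > pj/0 iff pi > pj, and pi/0 > pj/k, k>0. *)
Definition beats (c : R) (pi ai pj aj : nat) : bool :=
  let di := ai%:R + c in
  let dj := aj%:R + c in
  if di == 0 then (dj != 0) || (pj < pi)%N
  else (dj != 0) && (pj%:R / dj < pi%:R / di).

Definition next_seat (c : R) (p : seq nat) (a : nat -> nat) : nat :=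
  let n := size p in
  find (fun i => all (fun j => ~~ beats c (nth 0%N p j) (a j) (nth 0%N p i) (a i))
                     (iota 0 n))
       (iota 0 n).

Fixpoint seats_state (c : R) (p : seq nat) (k : nat) : nat -> nat :=
  match k with
  | 0 => fun _ => 0%N
  | k'.+1 => let a := seats_state c p k' in
             let i := next_seat c p a in
             fun j => if j == i then (a j).+1 else a j
  end.

Definition S_fin (c : R) (h : nat) (p : seq nat) : seq nat :=
  [seq next_seat c p (seats_state c p k) | k <- iota 0 h].

Definition S_inf (c : R) (p : seq nat) : nat -> nat :=
  fun k => next_seat c p (seats_state c p k).
End Stationary.

Definition lex_le_seq (s t : seq nat) : Prop :=
  s = t \/ exists k, [/\ (k < size s)%N, (k < size t)%N, take k s = take k t
                        & (nth 0 s k < nth 0 t k)%N].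

Definition lex_le_inf (s t : nat -> nat) : Prop :=
  (forall k, s k = t k) \/
  exists k, (forall i, (i < k)%N -> s i = t i) /\ (s k < t k)%N.

(* Main.v *)
Require Import Defs.
From mathcomp Require Import all_boot all_order all_algebra.
From mathcomp Require Import reals.
From mathcomp Require Import lra.
From Stdlib Require Import Classical FunctionalExtensionality.
Import Order.TTheory GRing.Theory Num.Theory.
Local Open Scope ring_scope.

Section Proofs.
Variable R : realType.

Lemma core (pi pj ai aj : nat) (c c' : R) : 0 <= c' -> c' < c -> (pi <= pj)%N ->
  pj%:R/(aj%:R+c) < pi%:R/(ai%:R+c) -> ~~ beats c' pi ai pj aj -> False.
Proof.
move=> c'0 cc' Hp.
have x0 : 0 <= (ai%:R : R) by rewrite ler0n.
have y0 : 0 <= (aj%:R : R) by rewrite ler0n.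
have P0 : 0 <= (pi%:R : R) by rewrite ler0n.
have QP : (pi%:R : R) <= pj%:R by rewrite ler_nat.
have dx : 0 < (ai%:R + c : R) by lra.
have dy : 0 < (aj%:R + c : R) by lra.
rewrite ltr_pdivrMr // mulrAC ltr_pdivlMr // => H.
have H2 : 0 <= ((pj%:R : R) - pi%:R) * (c - c') by apply: mulr_ge0; lra.
rewrite /beats; case: ifP => /eqP Hdi.
  rewrite negb_or => /andP[/negPn/eqP Hdj _].
  have ? : (ai%:R : R) = 0 by lra.
  have ? : (aj%:R : R) = 0 by lra.
  have ? : c' = 0 by lra.
  nra.
case: (boolP ((aj%:R : R) + c' == 0)) => [/eqP Hdj|Hdj] /=.
  have ? : (aj%:R : R) = 0 by lra.
  have ? : c' = 0 by lra.
  move=> _.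
  have H3 : 0 <= (pj%:R : R) * ai%:R by apply: mulr_ge0; lra.
  nra.
have dx' : 0 < (ai%:R + c' : R) by rewrite lt_neqAle eq_sym; apply/andP; split; [apply/eqP|lra].
have dy' : 0 < (aj%:R + c' : R) by rewrite lt_neqAle eq_sym; apply/andP; split; [|lra].
rewrite -leNgt ler_pdivrMr // mulrAC ler_pdivlMr // => H4.
nra.
Qed.

Lemma beatsP (c : R) pi ai pj aj : 0 < c ->
  beats c pi ai pj aj = (pj%:R/(aj%:R+c) < pi%:R/(ai%:R+c)).
Proof.
move=> c0; rewrite /beats.
have dx : 0 < (ai%:R + c : R) by have := ler0n R ai; lra.
have dy : 0 < (aj%:R + c : R) by have := ler0n R aj; lra.
by rewrite (gt_eqF dx) (gt_eqF dy).
Qed.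

Lemma exmax (f : nat -> R) (s : seq nat) : s != [::] ->
  exists2 x, x \in s & forall y, y \in s -> f y <= f x.
Proof.
elim: s => // x s IH _.
case: (eqVneq s [::]) => [->|sn].
  by exists x => [|y]; rewrite ?mem_seq1 ?inE // => /eqP ->.
have [m ms Hm] := IH sn.
case: (leP (f x) (f m)) => H.
  exists m; first by rewrite inE ms orbT.
  by move=> y; rewrite inE => /orP[/eqP ->|/Hm].
exists x; first by rewrite inE eqxx.
move=> y; rewrite inE => /orP[/eqP ->//|/Hm]; lra.
Qed.

Lemma key (p : seq nat) (c c' : R) (a : nat -> nat) :
  sorted geq p -> 0 <= c' -> c' < c ->
  (next_seat c p a <= next_seat c' p a)%N.
Proof.
move=> sp c'0 cc'.
have c0 : 0 < c by lra.
set i := next_seat c p a; set j := next_seat c' p a.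
case: (leqP i j) => // ji; exfalso.
set n := size p.
have jn : (j < n)%N.
  apply: (leq_trans ji); rewrite /i /next_seat.
  by have := find_size (fun i => all (fun j => ~~ beats c (nth 0%N p j) (a j) (nth 0%N p i) (a i))
                     (iota 0 n)) (iota 0 n); rewrite size_iota.
pose f k := (nth 0%N p k)%:R / ((a k)%:R + c) : R.
have ne : iota 0 n != [::] by rewrite -size_eq0 size_iota -lt0n (leq_ltn_trans _ jn).
have [m mI Hm] := exmax f (iota 0 n) ne.
have Pm : all (fun j => ~~ beats c (nth 0%N p j) (a j) (nth 0%N p m) (a m)) (iota 0 n).
  by apply/allP => k kI; rewrite beatsP // -leNgt; apply: Hm.
have hasm : has (fun i => all (fun j => ~~ beats c (nth 0%N p j) (a j) (nth 0%N p i) (a i))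
                     (iota 0 n)) (iota 0 n).
  by apply/hasP; exists m.
have iN := hasm; rewrite has_find size_iota in iN.
have Pi := nth_find 0%N hasm.
rewrite -/(next_seat c p a) -/i nth_iota // add0n in Pi.
have Pj := before_find 0%N ji.
rewrite nth_iota ?add0n ?(ltn_trans ji) // in Pj.
have [k kI Hk] : exists2 k, k \in iota 0 n & beats c (nth 0%N p k) (a k) (nth 0%N p j) (a j).
  by move/negbT/allPn: Pj => [k kI]; rewrite negbK => Hk; exists k.
have Hki := allP Pi k kI.
rewrite beatsP // in Hk; rewrite beatsP // -leNgt in Hki.
have Hij : f j < f i by apply: (lt_le_trans Hk Hki).
have hj : has (fun i => all (fun j => ~~ beats c' (nth 0%N p j) (a j) (nth 0%N p i) (a i))
                     (iota 0 n)) (iota 0 n) by rewrite has_find size_iota.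
have Pj' := nth_find 0%N hj.
rewrite -/(next_seat c' p a) -/j nth_iota // add0n in Pj'.
have iI : i \in iota 0 n by rewrite mem_iota add0n.
have Hn := allP Pj' i iI.
apply: (core _ _ _ _ _ _ c'0 cc' _ Hij Hn).
have tr : transitive geq by move=> x y z /= H1 H2; apply: leq_trans H2 H1.
have rf : reflexive geq by move=> x /=.
apply: (sorted_leq_nth tr rf 0%N sp) => //; last exact: ltnW.
Qed.

Lemma state_eq (p : seq nat) (c c' : R) k :
  (forall i, (i < k)%N -> S_inf c p i = S_inf c' p i) ->
  seats_state c p k = seats_state c' p k.
Proof.
elim: k => [//|k IH] H /=.
have Hk := H k (ltnSn k); rewrite /S_inf in Hk; rewrite Hk IH //.
by move=> i ik; apply: H; apply: ltnW.
Qed.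

Lemma first_diff (p : seq nat) (c c' : R) k :
  sorted geq p -> 0 <= c' -> c' < c ->
  (forall i, (i < k)%N -> S_inf c p i = S_inf c' p i) ->
  S_inf c p k <> S_inf c' p k -> (S_inf c p k < S_inf c' p k)%N.
Proof.
move=> sp c'0 cc' H ne.
have le : (S_inf c p k <= S_inf c' p k)%N.
  by rewrite /S_inf -(state_eq _ _ _ _ H); apply: key.
by rewrite ltn_neqAle le andbT; apply/eqP.
Qed.

Lemma decide_fin (p : seq nat) (c c' : R) h :
  (forall i, (i < h)%N -> S_inf c p i = S_inf c' p i) \/
  exists k, [/\ (k < h)%N, (forall i, (i < k)%N -> S_inf c p i = S_inf c' p i)
            & S_inf c p k <> S_inf c' p k].
Proof.
elim: h => [|h [IH|[k [kh Hk nk]]]].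
- by left.
- case: (eqVneq (S_inf c p h) (S_inf c' p h)) => [e|ne].
    left => i; rewrite ltnS leq_eqVlt => /orP[/eqP ->//|]; apply: IH.
  by right; exists h; split => //; apply/eqP.
- by right; exists k; split => //; apply: ltnW.
Qed.

End Proofs.

Theorem mainTheorem2 (R : realType) (p : seq nat) (c c' : R) :
  all (fun x => (0 < x)%N) p -> sorted geq p ->
  0 <= c' -> c' < c -> c <= 1 ->
  (forall h : nat, (0 < h)%N -> lex_le_seq (S_fin c h p) (S_fin c' h p)) /\
  lex_le_inf (S_inf c p) (S_inf c' p).
Proof.
move=> _ sp c'0 cc' _; split.
  move=> h _; rewrite /lex_le_seq.
  have E (d : R) : S_fin d h p = map (S_inf d p) (iota 0 h) by [].
  rewrite !E.
  case: (decide_fin _ p c c' h) => [H|[k [kh Hk nk]]].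
    left; apply/eq_in_map => i; rewrite mem_iota add0n; exact: H.
  right; exists k; rewrite !size_map size_iota; split => //.
    rewrite -!map_take take_iota; apply/eq_in_map => i.
    rewrite mem_iota add0n => /leq_trans/(_ (geq_minl _ _)); exact: Hk.
  by rewrite !(nth_map 0%N) ?size_iota // nth_iota // add0n; apply: first_diff.
case: (classic (exists k, S_inf c p k <> S_inf c' p k)) => [[k nk]|H].
  right.
  case: (decide_fin _ p c c' k.+1) => [H|[m [_ Hm nm]]].
    by exfalso; apply: nk; apply: H.
  by exists m; split => //; apply: first_diff.
left => k; apply: NNPP => nk; apply: H; by exists k.
Qed.
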